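(* Let $(X,d)$ be an infinite u.l.f. metric space. Then the Higson corona $\nu X$ has at least $2^{2^{\aleph_0}}$ elements.
   Context: A metric space is u.l.f. if for every $r>0$ the cardinalities of its balls of radius $r$ are uniformly bounded. A Higson function is a bounded $f\colon X\to\mathbb{C}$ such that for all $\varepsilon,R>0$ there is a finite $F\subseteq X$ with $|f(x)-f(y)|<\varepsilon$ whenever $x,y\in X\setminus F$ and $d(x,y)<R$. These form a unital C*-algebra $C_h(X)\subseteq\ell_\infty(X)$; its spectrum $hX$ is the Higson compactification of $X$ (containing $X$), and the Higson corona is $\nu X=hX\setminus X$. *)

(* Defs.v *)
From Stdlib Require Import Reals List.
From Coquelicot Require Import Coquelicot.
Import ListNotations.
Open Scope R_scope.

Record is_metric (X : Type) (d : X -> X -> R) : Prop := {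
  metric_nonneg : forall x y, 0 <= d x y;
  metric_eq0 : forall x y, d x y = 0 <-> x = y;
  metric_sym : forall x y, d x y = d y x;
  metric_triangle : forall x y z, d x z <= d x y + d y z
}.
Arguments is_metric {X} d.

Definition infinite_type (X : Type) : Prop :=
  forall l : list X, exists x, ~ In x l.

(* Uniformly locally finite: for every r > 0 the cardinalities of the balls
   B(x,r) = {y | d x y <= r} are uniformly bounded (every duplicate-free list
   of points of such a ball has length <= N). *)
Definition ulf {X : Type} (d : X -> X -> R) : Prop :=
  forall r, 0 < r -> exists N : nat, forall (x : X) (l : list X),
    NoDup l -> (forall y, In y l -> d x y <= r) -> (length l <= N)%nat.

Definition higson {X : Type} (d : X -> X -> R) (f : X -> C) : Prop :=
  (exists M, forall x, Cmod (f x) <= M) /\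
  (forall eps Rad, 0 < eps -> 0 < Rad ->
     exists F : list X, forall x y, ~ In x F -> ~ In y F -> d x y < Rad ->
       Cmod (Cminus (f x) (f y)) < eps).

(* Characters of the unital algebra C_h(X): nonzero (i.e. unital) multiplicative
   linear functionals. A functional is given as a map (X -> C) -> C, of which
   only the values on Higson functions matter. *)
Definition higson_character {X : Type} (d : X -> X -> R) (phi : (X -> C) -> C) : Prop :=
  (forall f g, higson d f -> higson d g ->
     phi (fun x => Cplus (f x) (g x)) = Cplus (phi f) (phi g)) /\
  (forall (c : C) f, higson d f -> phi (fun x => Cmult c (f x)) = Cmult c (phi f)) /\
  (forall f g, higson d f -> higson d g ->
     phi (fun x => Cmult (f x) (g x)) = Cmult (phi f) (phi g)) /\
  phi (fun _ => RtoC 1) = RtoC 1.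

(* Points of the Higson corona nu X = hX \ X: characters of C_h(X) that are not
   evaluation at a point of X. *)
Definition higson_corona_point {X : Type} (d : X -> X -> R) (phi : (X -> C) -> C) : Prop :=
  higson_character d phi /\
  forall x : X, exists f, higson d f /\ phi f <> f x.

(* Two functionals represent the same point of the spectrum iff they agree on C_h(X). *)
Definition same_on_higson {X : Type} (d : X -> X -> R) (phi psi : (X -> C) -> C) : Prop :=
  forall f, higson d f -> phi f = psi f.

(* Main.v *)
Require Import Defs.
From Stdlib Require Import Reals List Lra Lia Classical ClassicalEpsilon Arith Cantor Bool FunctionalExtensionality.
From Coquelicot Require Import Coquelicot.
From mathcomp Require boolp classical_sets filter.
Import ListNotations.
Open Scope R_scope.

Record ultra {T : Type} (U : (T -> Prop) -> Prop) : Prop := {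
 u_T : U (fun _ => True);
 u_I : forall A B, U A -> U B -> U (fun n => A n /\ B n);
 u_S : forall A B : T -> Prop, (forall n, A n -> B n) -> U A -> U B;
 u_ne : forall A, U A -> exists n, A n;
 u_max : forall A, U A \/ U (fun n => ~ A n) }.

Lemma ultra_ext {T J : Type} (B : J -> T -> Prop) :
  (forall l : list J, exists n, forall i, In i l -> B i n) ->
  exists U, ultra U /\ forall i, U (B i).
Proof.
  intros HB.
  set (F := fun S : T -> Prop => exists l, forall n, (forall i, In i l -> B i n) -> S n).
  assert (PF : filter.ProperFilter F).
  { constructor.
    - intros [l Hl]. destruct (HB l) as [n Hn]. exact (Hl n Hn).
    - constructor.
      + exists nil. intros; exact Logic.I.
      + intros P Q [l1 H1] [l2 H2]. exists (l1 ++ l2). intros n Hn. split.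
        * apply H1; intros i Hi; apply Hn, in_or_app; auto.
        * apply H2; intros i Hi; apply Hn, in_or_app; auto.
      + intros P Q PQ [l H]. exists l. intros n Hn. apply PQ, H, Hn. }
  destruct (filter.ultraFilterLemma PF) as [G [UG FG]].
  exists G. split.
  - constructor.
    + apply (@filter.filterT _ G). apply filter.filter_filter.
    + intros A B0 HA HB0. exact (@filter.filterI _ G _ A B0 HA HB0).
    + intros A B0 AB HA. exact (@filter.filterS _ G _ A B0 AB HA).
    + intros A HA. apply Classical_Prop.NNPP. intro Hn.
      apply (@filter.filter_not_empty _ G _).
      replace classical_sets.set0 with A; auto.
      apply boolp.funext. intro x. apply boolp.propext. split; [intro Hx; apply Hn; eauto | intros []].
    + intros A. exact (filter.in_ultra_setVsetC A UG).
  - intros i. apply FG. exists [i]. intros n Hn. apply Hn. left; reflexivity.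
Qed.
Lemma max_exists (P : nat -> Prop) : P 0%nat -> forall k,
  (forall m, P m -> (m <= k)%nat) -> exists n, P n /\ forall m, P m -> (m <= n)%nat.
Proof.
  intros H0 k. induction k as [|k IH]; intros Hk.
  - exists 0%nat. split; auto.
  - destruct (classic (P (S k))) as [HS|HS].
    + exists (S k). split; auto.
    + apply IH. intros m Hm. specialize (Hk m Hm).
      destruct (Nat.eq_dec m (S k)) as [->|]; [contradiction|lia].
Qed.

Lemma ball_finite {X} (d : X -> X -> R) : ulf d -> forall x r, 0 < r ->
  exists l, forall y, d x y <= r -> In y l.
Proof.
  intros Hu x r Hr. destruct (Hu r Hr) as [N HN].
  set (P := fun n => exists l, NoDup l /\ (forall y, In y l -> d x y <= r) /\ length l = n).
  destruct (max_exists P) with (k := N) as [n [[l [Hnd [Hin Hlen]]] Hmax]].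
  - exists nil. repeat split; [constructor| intros y []].
  - intros m [l [H1 [H2 H3]]]. subst m. apply (HN x l H1 H2).
  - exists l. intros y Hy. destruct (classic (In y l)) as [|Hn]; auto.
    exfalso. assert (P (S n)) as HP.
    { exists (y :: l). repeat split.
      - constructor; auto.
      - intros z [<-|Hz]; auto.
      - simpl; lia. }
    specialize (Hmax _ HP). lia.
Qed.

Lemma far_point {X} (d : X -> X -> R) : ulf d -> infinite_type X ->
  forall (n : nat) (l : list X), exists z, forall w, In w l -> INR n < d w z.
Proof.
  intros Hu Hi n l.
  assert (exists L, forall w z, In w l -> d w z <= INR n + 1 -> In z L) as [L HL].
  { induction l as [|a l IH].
    - exists nil. intros w z [].
    - destruct IH as [L HL]. destruct (ball_finite d Hu a (INR n + 1)) as [La HLa].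
      + pose proof (pos_INR n); lra.
      + exists (La ++ L). intros w z [<-|Hw] Hd; apply in_or_app; [left|right]; eauto. }
  destruct (Hi L) as [z Hz]. exists z. intros w Hw.
  destruct (Rlt_le_dec (INR n) (d w z)) as [|Hle]; auto.
  exfalso. apply Hz. apply (HL w z Hw). lra.
Qed.
Lemma seq_exists {X} (d : X -> X -> R) :
  (forall (n : nat) (l : list X), exists z, forall w, In w l -> INR n < d w z) ->
  is_metric d ->
  exists y : nat -> X, forall n m, n <> m -> INR n + INR m + 2 < d (y n) (y m).
Proof.
  intros Hf Hm.
  set (G := fun n l => proj1_sig (constructive_indefinite_description _ (Hf n l))).
  assert (HG : forall n l w, In w l -> INR n < d w (G n l)).
  { intros n l. exact (proj2_sig (constructive_indefinite_description _ (Hf n l))). }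
  set (pts := fix pts (n : nat) : list X := match n with O => nil | S k => G (2*k+2)%nat (pts k) :: pts k end).
  set (y := fun n => G (2*n+2)%nat (pts n)).
  assert (Hin : forall n k, (k < n)%nat -> In (y k) (pts n)).
  { induction n as [|n IH]; intros k Hk; [lia|].
    simpl. destruct (Nat.eq_dec k n) as [->|]; [left; reflexivity|right; apply IH; lia]. }
  assert (Hsep : forall k n, (k < n)%nat -> INR k + INR n + 2 < d (y k) (y n)).
  { intros k n Hk. pose proof (HG (2*n+2)%nat (pts n) (y k) (Hin n k Hk)).
    replace (INR (2*n+2)) with (2*INR n+2) in H by (rewrite plus_INR, mult_INR; simpl; ring).
    assert (INR k < INR n) by (apply lt_INR; lia). fold (y n) in H. lra. }
  exists y. intros n m Hnm.
  destruct (Nat.lt_total n m) as [H|[H|H]]; [| contradiction |].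
  - apply Hsep; auto.
  - rewrite (metric_sym _ _ Hm). rewrite Rplus_comm with (r1 := INR n). apply Hsep; auto.
Qed.

Definition idx (P : nat -> Prop) : option nat :=
  match excluded_middle_informative (exists n, P n) with
  | left H => Some (proj1_sig (constructive_indefinite_description _ H))
  | right _ => None end.

Lemma idx_Some P n : idx P = Some n -> P n.
Proof.
  unfold idx. destruct excluded_middle_informative as [H|H]; [|discriminate].
  intros E. injection E as <-. exact (proj2_sig (constructive_indefinite_description _ H)).
Qed.

Lemma idx_None P : idx P = None -> forall n, ~ P n.
Proof.
  unfold idx. destruct excluded_middle_informative as [H|H]; [discriminate|].
  intros _ n Hn. apply H. eauto.
Qed.

Section Bump.
End Bump.

Definition near {X} (d : X -> X -> R) (y : nat -> X) (x : X) : option nat :=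
  idx (fun n => d x (y n) < INR n + 1).

Definition hb {X} (d : X -> X -> R) (y : nat -> X) (g : nat -> bool) (x : X) : R :=
  match near d y x with
  | Some n => (if g n then 1 else 0) * ((INR n + 1 - d x (y n)) / (INR n + 1))
  | None => 0 end.

Definition cc {X} (d : X -> X -> R) (y : nat -> X) (x : X) : R :=
  match near d y x with Some n => / (INR n + 1) | None => 0 end.

Lemma near_unique {X} (d : X -> X -> R) y x n m : is_metric d ->
  (forall n m, n <> m -> INR n + INR m + 2 < d (y n) (y m)) ->
  d x (y n) < INR n + 1 -> d x (y m) < INR m + 1 -> n = m.
Proof.
  intros Hm Hs H1 H2. destruct (Nat.eq_dec n m) as [|Hne]; auto.
  specialize (Hs n m Hne). pose proof (metric_triangle _ _ Hm (y n) x (y m)).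
  rewrite (metric_sym _ _ Hm (y n) x) in H. lra.
Qed.

Lemma bnd_aux (a b r : R) : 0 < r -> 0 <= b <= 1 -> a <= r ->
  0 <= b * ((r - a) / r) <= (r - a) / r.
Proof.
  intros Hr Hb Ha. assert (0 <= (r - a) / r).
  { unfold Rdiv. apply Rmult_le_pos; [lra|]. left; apply Rinv_0_lt_compat; lra. }
  split; [apply Rmult_le_pos; lra|]. rewrite <- (Rmult_1_l ((r-a)/r)) at 2.
  apply Rmult_le_compat_r; lra.
Qed.

Lemma hb_bound {X} (d : X -> X -> R) y g x z : is_metric d ->
  (forall n m, n <> m -> INR n + INR m + 2 < d (y n) (y m)) ->
  Rabs (hb d y g x - hb d y g z) <= d x z * (cc d y x + cc d y z).
Proof.
  intros Hm Hs.
  assert (Hb : forall n, 0 <= (if g n then 1 else 0) <= 1) by (intros n; destruct (g n); lra).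
  assert (Hpos : forall n, 0 < INR n + 1) by (intros n; pose proof (pos_INR n); lra).
  assert (Hdxz : 0 <= d x z) by apply (metric_nonneg _ _ Hm).
  assert (Key : forall x' w n, near d y x' = Some n -> ~ d w (y n) < INR n + 1 ->
     0 <= hb d y g x' <= d x' w / (INR n + 1)).
  { intros x' w n Hn Hw. unfold hb. rewrite Hn.
    pose proof (idx_Some _ _ Hn) as Hlt. simpl in Hlt.
    pose proof (bnd_aux (d x' (y n)) (if g n then 1 else 0) (INR n + 1) (Hpos n) (Hb n) ltac:(lra)).
    split; [lra|]. apply Rle_trans with ((INR n + 1 - d x' (y n)) / (INR n + 1)); [lra|].
    unfold Rdiv. apply Rmult_le_compat_r; [left; apply Rinv_0_lt_compat; auto|].
    pose proof (metric_triangle _ _ Hm w x' (y n)). rewrite (metric_sym _ _ Hm w x') in H0. lra. }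
  assert (Hinv : forall n, 0 < / (INR n + 1)) by (intros; apply Rinv_0_lt_compat; auto).
  unfold cc. destruct (near d y x) as [n|] eqn:Ex; destruct (near d y z) as [m|] eqn:Ez.
  - destruct (Nat.eq_dec n m) as [<-|Hne].
    + unfold hb. rewrite Ex, Ez.
      replace ((if g n then 1 else 0) * ((INR n + 1 - d x (y n)) / (INR n + 1)) -
               (if g n then 1 else 0) * ((INR n + 1 - d z (y n)) / (INR n + 1)))
        with ((if g n then 1 else 0) * ((d z (y n) - d x (y n)) * / (INR n + 1))) by (unfold Rdiv; ring).
      rewrite Rabs_mult, Rabs_mult. rewrite (Rabs_right (/ (INR n + 1))) by (apply Rle_ge; left; apply Hinv).
      rewrite (Rabs_right (if g n then 1 else 0)) by (destruct (g n); lra).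
      assert (Rabs (d z (y n) - d x (y n)) <= d x z).
      { pose proof (metric_triangle _ _ Hm z x (y n)). pose proof (metric_triangle _ _ Hm x z (y n)).
        rewrite (metric_sym _ _ Hm z x) in H. apply Rabs_le; lra. }
      specialize (Hinv n). specialize (Hb n).
      assert (0 <= Rabs (d z (y n) - d x (y n)) * / (INR n + 1) <= d x z * / (INR n + 1)).
      { split; [apply Rmult_le_pos; [apply Rabs_pos|lra]|apply Rmult_le_compat_r; lra]. }
      assert ((if g n then 1 else 0) * (Rabs (d z (y n) - d x (y n)) * / (INR n + 1)) <=
               Rabs (d z (y n) - d x (y n)) * / (INR n + 1)).
      { rewrite <- (Rmult_1_l (_ * / _)) at 2. apply Rmult_le_compat_r; lra. }
      nra.
    + assert (H1 : ~ d z (y n) < INR n + 1).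
      { intro H. apply Hne. apply (near_unique d y z n m Hm Hs H (idx_Some _ _ Ez)). }
      assert (H2 : ~ d x (y m) < INR m + 1).
      { intro H. apply Hne. apply (near_unique d y x n m Hm Hs (idx_Some _ _ Ex) H). }
      pose proof (Key x z n Ex H1). pose proof (Key z x m Ez H2).
      rewrite (metric_sym _ _ Hm z x) in H0. unfold Rdiv in *.
      apply Rabs_le. pose proof (Hinv n). pose proof (Hinv m). nra.
  - pose proof (Key x z n Ex (idx_None _ Ez n)). unfold hb at 2. rewrite Ez.
    unfold Rdiv in *. rewrite Rplus_0_r, Rminus_0_r, Rabs_right; lra.
  - pose proof (Key z x m Ez (idx_None _ Ex m)). unfold hb at 1. rewrite Ex.
    rewrite (metric_sym _ _ Hm z x) in H. unfold Rdiv in *.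
    rewrite Rplus_0_l, Rminus_0_l, Rabs_Ropp, Rabs_right; lra.
  - unfold hb. rewrite Ex, Ez. rewrite Rminus_0_r, Rabs_R0. lra.
Qed.
Definition ULim (U : (nat -> Prop) -> Prop) (a : nat -> C) (c : C) : Prop :=
  forall eps, 0 < eps -> U (fun n => Cmod (Cminus (a n) c) < eps).

Lemma Cmod_sym (x y : C) : Cmod (Cminus x y) = Cmod (Cminus y x).
Proof.
  replace (Cminus x y) with (Copp (Cminus y x)) by (unfold Cminus; ring).
  apply Cmod_opp.
Qed.

Lemma Cmod_tri3 (x y z : C) : Cmod (Cminus x z) <= Cmod (Cminus x y) + Cmod (Cminus y z).
Proof.
  replace (Cminus x z) with (Cplus (Cminus x y) (Cminus y z)) by (unfold Cminus; ring).
  apply Cmod_triangle.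
Qed.

Lemma ULim_unique U a c c' : ultra U -> ULim U a c -> ULim U a c' -> c = c'.
Proof.
  intros HU H1 H2. destruct (classic (c = c')) as [|Hne]; auto. exfalso.
  assert (Hz : Cminus c c' <> 0).
  { intro E. apply Hne. replace c with (Cplus (Cminus c c') c') by (unfold Cminus; ring).
    rewrite E. ring. }
  apply Cmod_gt_0 in Hz.
  set (e := Cmod (Cminus c c') / 2).
  assert (He : 0 < e) by (unfold e; lra).
  destruct (u_ne _ HU _ (u_I _ HU _ _ (H1 e He) (H2 e He))) as [n [A B]].
  pose proof (Cmod_tri3 c (a n) c'). rewrite (Cmod_sym c (a n)) in H. unfold e in *. lra.
Qed.

Lemma ULim_const U c : ultra U -> ULim U (fun _ => c) c.
Proof.
  intros HU eps He. apply (u_S _ HU (fun _ => True)); [|apply (u_T _ HU)].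
  intros n _. replace (Cminus c c) with (RtoC 0) by (unfold Cminus; ring).
  rewrite Cmod_0. exact He.
Qed.

Lemma ULim_plus U a b c c' : ultra U -> ULim U a c -> ULim U b c' ->
  ULim U (fun n => Cplus (a n) (b n)) (Cplus c c').
Proof.
  intros HU H1 H2 eps He.
  refine (u_S _ HU _ _ ?[incl] (u_I _ HU _ _ (H1 (eps/2) ltac:(lra)) (H2 (eps/2) ltac:(lra)))).
  intros n [A B].
  replace (Cminus (Cplus (a n) (b n)) (Cplus c c')) with (Cplus (Cminus (a n) c) (Cminus (b n) c'))
    by (unfold Cminus; ring).
  pose proof (Cmod_triangle (Cminus (a n) c) (Cminus (b n) c')). lra.
Qed.

Lemma aux_small K eps : 0 <= K -> 0 < eps -> K * (eps / (2 * (K + 1))) < eps / 2.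
Proof.
  intros HK He. assert (Ht : 0 < / (2 * (K + 1))) by (apply Rinv_0_lt_compat; lra).
  assert (Hi : / (2 * (K + 1)) * (2 * (K + 1)) = 1) by (apply Rinv_l; lra).
  unfold Rdiv. set (t := / (2 * (K + 1))) in *. nra.
Qed.

Lemma ULim_mult U a b c c' M : ultra U -> (forall n, Cmod (a n) <= M) ->
  ULim U a c -> ULim U b c' -> ULim U (fun n => Cmult (a n) (b n)) (Cmult c c').
Proof.
  intros HU HM H1 H2 eps He.
  assert (HM0 : 0 <= M) by (eapply Rle_trans; [apply Cmod_ge_0|apply (HM 0%nat)]).
  pose proof (Cmod_ge_0 c') as Hc0.
  set (e1 := eps / (2 * (Cmod c' + 1))). set (e2 := eps / (2 * (M + 1))).
  assert (He1 : 0 < e1) by (unfold e1; apply Rdiv_lt_0_compat; lra).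
  assert (He2 : 0 < e2) by (unfold e2; apply Rdiv_lt_0_compat; lra).
  pose proof (aux_small _ _ Hc0 He) as S1. pose proof (aux_small _ _ HM0 He) as S2.
  fold e1 in S1. fold e2 in S2.
  refine (u_S _ HU _ _ ?[incl] (u_I _ HU _ _ (H1 e1 He1) (H2 e2 He2))).
  intros n [A B].
  replace (Cminus (Cmult (a n) (b n)) (Cmult c c')) with
    (Cplus (Cmult (a n) (Cminus (b n) c')) (Cmult c' (Cminus (a n) c))) by (unfold Cminus; ring).
  eapply Rle_lt_trans; [apply Cmod_triangle|]. rewrite !Cmod_mult.
  pose proof (HM n). pose proof (Cmod_ge_0 (a n)). pose proof (Cmod_ge_0 (Cminus (b n) c')).
  pose proof (Cmod_ge_0 (Cminus (a n) c)).
  assert (Cmod (a n) * Cmod (Cminus (b n) c') <= M * e2) by (apply Rmult_le_compat; lra).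
  assert (Cmod c' * Cmod (Cminus (a n) c) <= Cmod c' * e1) by (apply Rmult_le_compat_l; lra).
  lra.
Qed.

Lemma RLim_exists U (r : nat -> R) M : ultra U -> (forall n, Rabs (r n) <= M) ->
  exists L, forall eps, 0 < eps -> U (fun n => Rabs (r n - L) < eps).
Proof.
  intros HU HM.
  set (E := fun t => U (fun n => t < r n)).
  assert (Hb : is_upper_bound E M).
  { intros t Ht. destruct (u_ne _ HU _ Ht) as [n Hn]. pose proof (HM n).
    apply Rabs_le_between in H. lra. }
  assert (Hne : exists t, E t).
  { exists (- M - 1). apply (u_S _ HU (fun _ => True)); [|apply (u_T _ HU)].
    intros n _. pose proof (HM n). apply Rabs_le_between in H. lra. }
  destruct (completeness E (ex_intro _ M Hb) Hne) as [L [HL1 HL2]].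
  exists L. intros eps He.
  assert (Ha : exists t, E t /\ L - eps < t).
  { apply NNPP. intro Hn. assert (is_upper_bound E (L - eps)).
    { intros t Ht. destruct (Rle_lt_dec t (L - eps)); auto. exfalso; apply Hn; eauto. }
    specialize (HL2 _ H). lra. }
  destruct Ha as [t [Ht Hlt]].
  assert (Hnb : ~ E (L + eps / 2)) by (intro H; specialize (HL1 _ H); lra).
  destruct (u_max _ HU (fun n => L + eps / 2 < r n)) as [H|H]; [contradiction|].
  refine (u_S _ HU _ _ ?[incl] (u_I _ HU _ _ Ht H)). intros n [A B].
  apply Rabs_def1; lra.
Qed.

Lemma Cmod_le_sum (z : C) : Cmod z <= Rabs (fst z) + Rabs (snd z).
Proof.
  destruct z as [a b]. change (Cmod (a, b) <= Rabs a + Rabs b).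
  replace (a, b) with (Cplus (RtoC a) (Cmult Ci (RtoC b))) by (unfold RtoC, Ci, Cplus, Cmult; simpl; f_equal; ring).
  eapply Rle_trans; [apply Cmod_triangle|]. rewrite Cmod_mult, !Cmod_R.
  replace (Cmod Ci) with 1. simpl; lra.
  unfold Cmod, Ci; simpl. replace (0 * (0 * 1) + 1 * (1 * 1)) with 1 by ring. now rewrite sqrt_1.
Qed.

Lemma ULim_exists U a M : ultra U -> (forall n, Cmod (a n) <= M) -> exists c, ULim U a c.
Proof.
  intros HU HM.
  assert (H1 : forall n, Rabs (fst (a n)) <= M).
  { intro n. eapply Rle_trans; [|apply (HM n)]. eapply Rle_trans; [|apply Rmax_Cmod]. apply Rmax_l. }
  assert (H2 : forall n, Rabs (snd (a n)) <= M).
  { intro n. eapply Rle_trans; [|apply (HM n)]. eapply Rle_trans; [|apply Rmax_Cmod]. apply Rmax_r. }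
  destruct (RLim_exists U _ _ HU H1) as [L1 HL1]. destruct (RLim_exists U _ _ HU H2) as [L2 HL2].
  exists (L1, L2). intros eps He.
  refine (u_S _ HU _ _ ?[incl] (u_I _ HU _ _ (HL1 (eps/2) ltac:(lra)) (HL2 (eps/2) ltac:(lra)))).
  intros n [A B]. eapply Rle_lt_trans; [apply Cmod_le_sum|].
  destruct (a n) as [p q]. simpl in *. unfold Rminus in A, B. lra.
Qed.

Definition Ulim (U : (nat -> Prop) -> Prop) (a : nat -> C) : C :=
  match excluded_middle_informative (exists c, ULim U a c) with
  | left H => proj1_sig (constructive_indefinite_description _ H)
  | right _ => RtoC 0 end.

Lemma Ulim_spec U a c : ultra U -> ULim U a c -> Ulim U a = c.
Proof.
  intros HU H. unfold Ulim. destruct excluded_middle_informative as [E|E].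
  - apply (ULim_unique U a); auto. exact (proj2_sig (constructive_indefinite_description _ E)).
  - exfalso; eauto.
Qed.
Fixpoint code (k : nat) (s : nat -> bool) : nat :=
  match k with O => O | S k => (Nat.b2n (s O) + 2 * code k (fun i => s (S i)))%nat end.

Lemma code_bit k : forall s i, (i < k)%nat -> Nat.testbit (code k s) i = s i.
Proof.
  induction k as [|k IH]; intros s i Hi; [lia|]. change (code (S k) s) with (Nat.b2n (s O) + 2 * code k (fun i => s (S i)))%nat.
  destruct i as [|i].
  - apply Nat.add_b2n_double_bit0.
  - rewrite <- Nat.testbit_div2, Nat.div2_div, Nat.add_b2n_double_div2. apply (IH (fun i => s (S i))). lia.
Qed.

Definition memb (s : nat -> bool) (n : nat) : bool :=
  let (k, m) := Cantor.of_nat n in Nat.testbit m (code k s).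

Lemma sep_one (a : nat -> bool) (l : list (nat -> bool)) : exists K,
  forall s, In s l -> a <> s -> exists i, (i < K)%nat /\ a i <> s i.
Proof.
  induction l as [|b l [K HK]].
  - exists 0%nat. intros s [].
  - destruct (classic (a = b)) as [E|E].
    + exists K. intros s [<-|Hs] Hne; [contradiction|auto].
    + assert (exists i, a i <> b i) as [i Hi].
      { apply NNPP. intro Hn. apply E. apply functional_extensionality. intro x.
        apply NNPP. intro Hx. apply Hn. eauto. }
      exists (S i + K)%nat. intros s [<-|Hs] Hne.
      * exists i. split; [lia|auto].
      * destruct (HK s Hs Hne) as [j [Hj Hj']]. exists j. split; [lia|auto].
Qed.

Lemma sep_K (l : list (nat -> bool)) : exists K, forall s s', In s l -> In s' l -> s <> s' ->
  exists i, (i < K)%nat /\ s i <> s' i.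
Proof.
  induction l as [|a l [K HK]].
  - exists 0%nat. intros s s' [].
  - destruct (sep_one a l) as [K1 HK1]. exists (K + K1)%nat.
    intros s s' Hs Hs' Hne. destruct Hs as [Es|Hs]; destruct Hs' as [Es'|Hs']; subst.
    + contradiction.
    + destruct (HK1 s' Hs' Hne) as [i [Hi Hi']]. exists i. split; [lia|auto].
    + assert (s' <> s) by auto. destruct (HK1 s Hs H) as [i [Hi Hi']]. exists i. split; [lia|auto].
    + destruct (HK s s' Hs Hs' Hne) as [i [Hi Hi']]. exists i. split; [lia|auto].
Qed.

Definition mk (k : nat) (p : (nat -> bool) -> bool) (l : list (nat -> bool)) : nat :=
  fold_right (fun s acc => if p s then Nat.lor (2 ^ (code k s)) acc else acc) 0%nat l.

Lemma mk_bit k p l j : Nat.testbit (mk k p l) j = existsb (fun s => p s && Nat.eqb (code k s) j) l.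
Proof.
  induction l as [|a l IH]; simpl.
  - apply Nat.bits_0.
  - destruct (p a); simpl; [rewrite Nat.lor_spec, Nat.pow2_bits_eqb|]; rewrite IH; reflexivity.
Qed.

Definition ls_of (l : list ((nat -> bool) + nat)) : list (nat -> bool) :=
  flat_map (fun i => match i with inl s => [s] | inr _ => [] end) l.
Definition J_of (l : list ((nat -> bool) + nat)) : nat :=
  fold_right (fun i acc => match i with inl _ => acc | inr j => (j + acc)%nat end) 0%nat l.

Lemma ls_of_in l s : In (inl s) l -> In s (ls_of l).
Proof.
  unfold ls_of. intros H. apply in_flat_map. exists (inl s). simpl; auto.
Qed.

Lemma J_of_in l j : In (inr j) l -> (j <= J_of l)%nat.
Proof.
  induction l as [|a l IH]; simpl; [intros []|]. intros [->|H]; [lia|].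
  specialize (IH H). destruct a; lia.
Qed.

Definition Bset (p : (nat -> bool) -> bool) (i : (nat -> bool) + nat) (n : nat) : Prop :=
  match i with inl s => memb s n = p s | inr j => (j <= n)%nat end.

Lemma Bset_FIP p (l : list ((nat -> bool) + nat)) : exists n, forall i, In i l -> Bset p i n.
Proof.
  destruct (sep_K (ls_of l)) as [K HK].
  set (k := (K + J_of l)%nat). set (m := mk k p (ls_of l)).
  exists (Cantor.to_nat (k, m)). intros [s|j] Hi; unfold Bset.
  - unfold memb. rewrite Cantor.cancel_of_to. unfold m. rewrite mk_bit.
    apply ls_of_in in Hi.
    destruct (p s) eqn:Ps.
    + apply existsb_exists. exists s. rewrite Ps, Nat.eqb_refl. auto.
    + destruct (existsb _ _) eqn:Ex; auto. apply existsb_exists in Ex.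
      destruct Ex as [s' [Hs' Hb]]. apply andb_true_iff in Hb as [Hp Hc].
      apply Nat.eqb_eq in Hc.
      destruct (classic (s' = s)) as [->|Hne]; [congruence|].
      destruct (HK s' s Hs' Hi Hne) as [i0 [Hi0 Hd]]. exfalso. apply Hd.
      rewrite <- (code_bit k s' i0), <- (code_bit k s i0) by (unfold k; lia). rewrite Hc. reflexivity.
  - apply J_of_in in Hi. pose proof (Cantor.to_nat_non_decreasing k m). unfold k in *. lia.
Qed.

Lemma near_y {X} (d : X -> X -> R) y n : is_metric d ->
  (forall n m, n <> m -> INR n + INR m + 2 < d (y n) (y m)) -> near d y (y n) = Some n.
Proof.
  intros Hm Hs. assert (P : d (y n) (y n) < INR n + 1).
  { rewrite (proj2 (metric_eq0 _ _ Hm (y n) (y n)) eq_refl). pose proof (pos_INR n); lra. }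
  destruct (near d y (y n)) as [k|] eqn:E.
  - f_equal. apply (near_unique d y (y n) k n Hm Hs (idx_Some _ _ E) P).
  - exfalso. exact (idx_None _ E n P).
Qed.

Lemma hb_y {X} (d : X -> X -> R) y g n : is_metric d ->
  (forall n m, n <> m -> INR n + INR m + 2 < d (y n) (y m)) -> hb d y g (y n) = if g n then 1 else 0.
Proof.
  intros Hm Hs. unfold hb. rewrite (near_y d y n Hm Hs).
  rewrite (proj2 (metric_eq0 _ _ Hm (y n) (y n)) eq_refl).
  assert (INR n + 1 <> 0) by (pose proof (pos_INR n); lra).
  replace ((INR n + 1 - 0) / (INR n + 1)) with 1 by (field; auto). ring.
Qed.

Lemma hb_range {X} (d : X -> X -> R) y g x : is_metric d -> 0 <= hb d y g x <= 1.
Proof.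
  intros Hm. unfold hb. destruct (near d y x) as [n|] eqn:E; [|lra].
  pose proof (idx_Some _ _ E) as Hlt. simpl in Hlt.
  assert (Hr : 0 < INR n + 1) by (pose proof (pos_INR n); lra).
  assert (Hb : 0 <= (if g n then 1 else 0) <= 1) by (destruct (g n); lra).
  pose proof (bnd_aux (d x (y n)) _ (INR n + 1) Hr Hb ltac:(lra)).
  assert ((INR n + 1 - d x (y n)) / (INR n + 1) <= 1).
  { pose proof (metric_nonneg _ _ Hm x (y n)).
    apply Rmult_le_reg_r with (INR n + 1); auto. unfold Rdiv. rewrite Rmult_assoc, Rinv_l by lra. lra. }
  lra.
Qed.

Lemma RtoC_minus (a b : R) : Cminus (RtoC a) (RtoC b) = RtoC (a - b).
Proof. unfold Cminus, Cplus, Copp, RtoC; simpl; f_equal; ring. Qed.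

Lemma hb_higson {X} (d : X -> X -> R) y g : ulf d -> is_metric d ->
  (forall n m, n <> m -> INR n + INR m + 2 < d (y n) (y m)) ->
  higson d (fun x => RtoC (hb d y g x)).
Proof.
  intros Hu Hm Hs. split.
  - exists 1. intros x. rewrite Cmod_R. pose proof (hb_range d y g x Hm). apply Rabs_le; lra.
  - intros eps Rad He HR.
    destruct (nfloor_ex (2 * Rad / eps)) as [n0 Hn0].
    { unfold Rdiv. apply Rmult_le_pos; [lra|left; apply Rinv_0_lt_compat; lra]. }
    set (N := S n0).
    assert (HN : 2 * Rad / eps < INR N) by (unfold N; rewrite S_INR; lra).
    assert (HF : forall N, exists F, forall n x, (n < N)%nat -> d (y n) x <= INR n + 1 -> In x F).
    { induction N0 as [|N0 [F HF]]. { exists nil. intros; lia. }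
      destruct (ball_finite d Hu (y N0) (INR N0 + 1)) as [L HL]. { pose proof (pos_INR N0); lra. }
      exists (L ++ F). intros n x Hn Hd. apply in_or_app.
      destruct (Nat.eq_dec n N0) as [->|]; [left; auto|right; apply (HF n); auto; lia]. }
    destruct (HF N) as [F HFF]. exists F. intros x z Hx Hz Hd.
    rewrite RtoC_minus, Cmod_R.
    assert (HNp : 0 < INR N + 1) by (pose proof (pos_INR N); lra).
    set (t := / (INR N + 1)).
    assert (Ht : 0 < t) by (apply Rinv_0_lt_compat; lra).
    assert (Hc : forall w, ~ In w F -> 0 <= cc d y w <= t).
    { intros w Hw. unfold cc. destruct (near d y w) as [n|] eqn:E; [|lra].
      pose proof (idx_Some _ _ E) as Hlt. simpl in Hlt.
      assert (N <= n)%nat.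
      { destruct (Nat.lt_ge_cases n N) as [Hl|]; auto. exfalso. apply Hw. apply (HFF n w Hl).
        rewrite (metric_sym _ _ Hm). lra. }
      split. { left; apply Rinv_0_lt_compat; pose proof (pos_INR n); lra. }
      unfold t. apply Rinv_le_contravar; auto. apply le_INR in H. lra. }
    pose proof (Hc x Hx). pose proof (Hc z Hz).
    pose proof (hb_bound d y g x z Hm Hs).
    pose proof (metric_nonneg _ _ Hm x z).
    assert (d x z * (cc d y x + cc d y z) <= Rad * (2 * t)) by nra.
    assert (Htt : t * (INR N + 1) = 1) by (unfold t; apply Rinv_l; lra).
    assert (2 * Rad < eps * INR N).
    { apply Rmult_lt_compat_r with (r := eps) in HN; auto. unfold Rdiv in HN.
      rewrite Rmult_assoc, Rinv_l in HN by lra. lra. }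
    assert (Rad * (2 * t) < eps) by nra.
    lra.
Qed.

Definition ind {X} (x : X) (z : X) : C :=
  if excluded_middle_informative (z = x) then RtoC 1 else RtoC 0.

Lemma ind_higson {X} (d : X -> X -> R) x : higson d (ind x).
Proof.
  split.
  - exists 1. intros z. unfold ind. destruct excluded_middle_informative; rewrite Cmod_R, Rabs_R1 || rewrite Cmod_R, Rabs_R0; lra.
  - intros eps Rad He _. exists [x]. intros z w Hz Hw _. unfold ind.
    destruct excluded_middle_informative as [E|_]; [exfalso; apply Hz; left; auto|].
    destruct excluded_middle_informative as [E|_]; [exfalso; apply Hw; left; auto|].
    rewrite RtoC_minus, Cmod_R. replace (0 - 0) with 0 by ring. rewrite Rabs_R0. exact He.
Qed.

Lemma ULim_ev U a c : ultra U -> U (fun n => a n = c) -> ULim U a c.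
Proof.
  intros HU H eps He. refine (u_S _ HU _ _ ?[incl] H). intros n E. rewrite E.
  replace (Cminus c c) with (RtoC 0) by (unfold Cminus; ring). rewrite Cmod_0. exact He.
Qed.

Lemma Ulim_bounded U a M : ultra U -> (forall n, Cmod (a n) <= M) -> ULim U a (Ulim U a).
Proof.
  intros HU HM. destruct (ULim_exists U a M HU HM) as [c Hc]. rewrite (Ulim_spec U a c HU Hc). exact Hc.
Qed.

Theorem theorem4p14 (X : Type) (d : X -> X -> R) :
  is_metric d -> infinite_type X -> ulf d ->
  exists F : ((nat -> bool) -> bool) -> ((X -> C) -> C),
    (forall p, higson_corona_point d (F p)) /\
    (forall p q, same_on_higson d (F p) (F q) -> p = q).
Proof.
  intros Hm Hi Hu.
  destruct (seq_exists d (far_point d Hu Hi) Hm) as [y Hs].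
  assert (HUex : forall p, exists U, ultra U /\ forall i, U (Bset p i)).
  { intros p. apply ultra_ext. apply Bset_FIP. }
  set (Uf := fun p => proj1_sig (constructive_indefinite_description _ (HUex p))).
  assert (HUf : forall p, ultra (Uf p) /\ forall i, Uf p (Bset p i)).
  { intros p. exact (proj2_sig (constructive_indefinite_description _ (HUex p))). }
  exists (fun p f => Ulim (Uf p) (fun n => f (y n))).
  assert (Hbd : forall f, higson d f -> exists M, forall n, Cmod (f (y n)) <= M).
  { intros f [[M HM] _]. exists M. intros n; apply HM. }
  split.
  - intros p. destruct (HUf p) as [HU HB]. split; [split; [|split; [|split]]|].
    + intros f g Hf Hg. destruct (Hbd f Hf) as [M1 H1]. destruct (Hbd g Hg) as [M2 H2].
      apply (Ulim_spec _ _ _ HU). apply ULim_plus; auto; eapply Ulim_bounded; eauto.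
    + intros c f Hf. destruct (Hbd f Hf) as [M1 H1].
      apply (Ulim_spec _ _ _ HU). apply (ULim_mult _ (fun _ => c) _ _ _ (Cmod c) HU).
      * intros; apply Rle_refl.
      * apply ULim_const; auto.
      * eapply Ulim_bounded; eauto.
    + intros f g Hf Hg. destruct (Hbd f Hf) as [M1 H1]. destruct (Hbd g Hg) as [M2 H2].
      apply (Ulim_spec _ _ _ HU). apply (ULim_mult _ _ _ _ _ M1 HU H1); eapply Ulim_bounded; eauto.
    + apply (Ulim_spec _ _ _ HU). apply ULim_const; auto.
    + intros x. exists (ind x). split; [apply ind_higson|].
      assert (E : Ulim (Uf p) (fun n => ind x (y n)) = RtoC 0).
      { apply (Ulim_spec _ _ _ HU). apply ULim_ev; auto.
        destruct (classic (exists n0, y n0 = x)) as [[n0 Hn0]|Hno].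
        - refine (u_S _ HU _ _ ?[incl] (HB (inr (S n0)))). intros n Hn. simpl in Hn.
          unfold ind. destruct excluded_middle_informative as [E|]; auto. exfalso.
          assert (n <> n0) by lia. specialize (Hs n n0 H). rewrite E, <- Hn0 in Hs.
          rewrite (proj2 (metric_eq0 _ _ Hm (y n0) (y n0)) eq_refl) in Hs.
          pose proof (pos_INR n); pose proof (pos_INR n0); lra.
        - refine (u_S _ HU _ _ ?[incl] (u_T _ HU)). intros n _. unfold ind.
          destruct excluded_middle_informative as [E|]; auto. exfalso; eauto. }
      rewrite E. unfold ind. destruct excluded_middle_informative as [_|C]; [|contradiction].
      intro E2. apply (f_equal fst) in E2. simpl in E2. lra.
  - intros p q H. apply functional_extensionality. intros s.
    destruct (Bool.bool_dec (p s) (q s)) as [|Hne]; auto. exfalso.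
    set (f := fun x => RtoC (hb d y (memb s) x)).
    assert (Hf : higson d f) by (apply hb_higson; auto).
    assert (Hv : forall r, ultra (Uf r) -> (forall i, Uf r (Bset r i)) ->
               Ulim (Uf r) (fun n => f (y n)) = RtoC (if r s then 1 else 0)).
    { intros r HU HB. apply (Ulim_spec _ _ _ HU). apply ULim_ev; auto.
      refine (u_S _ HU _ _ ?[incl] (HB (inl s))). intros n Hn. simpl in Hn.
      unfold f. rewrite (hb_y d y (memb s) n Hm Hs). rewrite Hn. reflexivity. }
    specialize (H f Hf). simpl in H.
    rewrite (Hv p (proj1 (HUf p)) (proj2 (HUf p))), (Hv q (proj1 (HUf q)) (proj2 (HUf q))) in H.
    apply (f_equal fst) in H. simpl in H. destruct (p s), (q s); try congruence; lra.
Qed.
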